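(* Let $(X,d_X)$, $(Y,d_Y)$ be metric spaces with $Y$ separable, and let $1\le\xi<\omega_1$. For every $f:X\to Y$ the following are equivalent: (i) $f$ is of Baire class $\xi$; (ii) there is a sequence $\langle f_k:k\in\omega\rangle$ converging uniformly to $f$ such that each $f_k$ is locally constant on some $\mathbf{\Sigma}^0_{\xi+1}$-partition of $X$; (iii) there is a sequence $\langle f_k:k\in\omega\rangle$ converging uniformly to $f$ such that each $f_k$ is locally Lipschitz on some $\mathbf{\Sigma}^0_{\xi+1}$-partition of $X$; (iv) there is a sequence $\langle f_k:k\in\omega\rangle$ converging uniformly to $f$ such that each $f_k$ is locally continuous on some $\mathbf{\Sigma}^0_{\xi+1}$-partition of $X$; (v) there is a sequence $\langle f_k:k\in\omega\rangle$ converging uniformly to $f$ such that each $f_k$ is a $\mathbf{\Delta}^0_{\xi+1}$-function.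
   Context: Work in ZF plus countable choice over the reals. $f$ is of Baire class $1$ if $f^{-1}(U)\in\mathbf{\Sigma}^0_2(X)$ for every open $U\subseteq Y$; for $1<\xi<\omega_1$, $f$ is of Baire class $\xi$ if it is the pointwise limit of functions $f_n:X\to Y$ each of Baire class $\xi_n$ for some $1\le\xi_n<\xi$. A $\mathbf{\Gamma}$-partition of $X$ is a family $\langle C_n:n<N\rangle$, $1\le N\le\omega$, of nonempty pairwise disjoint sets in $\mathbf{\Gamma}$ with union $X$. For a set $\mathcal{F}$ of functions $X\to Y$, a function $g:X\to Y$ is locally in $\mathcal{F}$ on the partition $\langle C_n:n<N\rangle$ if there are $g_n\in\mathcal{F}$ with $g\restriction C_n=g_n\restriction C_n$ for all $n<N$ (''locally constant/Lipschitz/continuous'' means $\mathcal{F}$ is the set of constant/Lipschitz/continuous functions $X\to Y$). $g$ is a $\mathbf{\Delta}^0_\eta$-function if $g^{-1}(A)\in\mathbf{\Sigma}^0_\eta(X)$ for every $A\in\mathbf{\Sigma}^0_\eta(Y)$. *)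

(* Defs.v *)
From Stdlib Require Import Reals.
Open Scope R_scope.

Definition is_metric {X : Type} (d : X -> X -> R) : Prop :=
  (forall x y, 0 <= d x y) /\
  (forall x y, d x y = 0 <-> x = y) /\
  (forall x y, d x y = d y x) /\
  (forall x y z, d x z <= d x y + d y z).

Definition mopen {X : Type} (d : X -> X -> R) (U : X -> Prop) : Prop :=
  forall x, U x -> exists r, 0 < r /\ forall y, d x y < r -> U y.

Definition separable {Y : Type} (d : Y -> Y -> R) : Prop :=
  exists D : Y -> Prop,
    (exists g : Y -> nat, forall a b, D a -> D b -> g a = g b -> a = b) /\
    (forall y e, 0 < e -> exists z, D z /\ d y z < e).

(** * Countable ordinals, represented as elements of a countable well-order *)
Definition countable_wellorder {W : Type} (lt : W -> W -> Prop) : Prop :=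
  (forall a, ~ lt a a) /\
  (forall a b c, lt a b -> lt b c -> lt a c) /\
  (forall a b, lt a b \/ a = b \/ lt b a) /\
  well_founded lt /\
  (exists g : W -> nat, forall a b, g a = g b -> a = b).

(** [ord_pos lt w]: w >= 1 (w is not the least element) *)
Definition ord_pos {W : Type} (lt : W -> W -> Prop) (w : W) : Prop :=
  exists z, lt z w.

(** [is_one lt w]: w = 1 (w has exactly one predecessor) *)
Definition is_one {W : Type} (lt : W -> W -> Prop) (w : W) : Prop :=
  exists z, lt z w /\ forall v, lt v w -> v = z.

(** * Additive Borel classes  Sigma^0_xi  (xi >= 1) on a metric space
    Sigma^0_1 = open sets;  for xi > 1, Sigma^0_xi = countable unions of
    sets whose complements are in Sigma^0_eta for some 1 <= eta < xi. *)
Inductive Sigma0 {X : Type} (d : X -> X -> R) {W : Type} (lt : W -> W -> Prop)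
  : W -> (X -> Prop) -> Prop :=
| Sigma0_open xi A : is_one lt xi -> mopen d A -> Sigma0 d lt xi A
| Sigma0_union xi A (F : nat -> X -> Prop) (eta : nat -> W) :
    (forall n, ord_pos lt (eta n) /\ lt (eta n) xi) ->
    (forall n, Sigma0 d lt (eta n) (fun x => ~ F n x)) ->
    (forall x, A x <-> exists n, F n x) ->
    Sigma0 d lt xi A.

(** Sigma^0_(xi+1) for xi >= 1: countable unions of sets whose complements are
    in Sigma^0_eta for some 1 <= eta <= xi (i.e. eta < xi+1). *)
Definition Sigma0_succ {X : Type} (d : X -> X -> R) {W : Type}
  (lt : W -> W -> Prop) (xi : W) (A : X -> Prop) : Prop :=
  exists (F : nat -> X -> Prop) (eta : nat -> W),
    (forall n, ord_pos lt (eta n) /\ (lt (eta n) xi \/ eta n = xi)) /\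
    (forall n, Sigma0 d lt (eta n) (fun x => ~ F n x)) /\
    (forall x, A x <-> exists n, F n x).

Definition mconverges {Y : Type} (d : Y -> Y -> R) (u : nat -> Y) (l : Y) : Prop :=
  forall e, 0 < e -> exists N, forall n, (N <= n)%nat -> d (u n) l < e.

Definition unif_converges {X Y : Type} (d : Y -> Y -> R)
  (fs : nat -> X -> Y) (f : X -> Y) : Prop :=
  forall e, 0 < e -> exists N, forall n x, (N <= n)%nat -> d (fs n x) (f x) < e.

Inductive Baire {X Y : Type} (dX : X -> X -> R) (dY : Y -> Y -> R)
  {W : Type} (lt : W -> W -> Prop) : W -> (X -> Y) -> Prop :=
| Baire_one xi f :
    is_one lt xi ->
    (forall U, mopen dY U -> Sigma0_succ dX lt xi (fun x => U (f x))) ->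
    Baire dX dY lt xi f
| Baire_lim xi f (fs : nat -> X -> Y) (eta : nat -> W) :
    (forall n, ord_pos lt (eta n) /\ lt (eta n) xi) ->
    (forall n, Baire dX dY lt (eta n) (fs n)) ->
    (forall x, mconverges dY (fun n => fs n x) (f x)) ->
    Baire dX dY lt xi f.

(** * Partitions.  The length N with 1 <= N <= omega is [Some m] (m >= 1)
    for a finite N = m, and [None] for N = omega. *)
Definition inN (N : option nat) (n : nat) : Prop :=
  match N with Some m => (n < m)%nat | None => True end.

Definition is_partition {X : Type} (Gamma : (X -> Prop) -> Prop)
  (N : option nat) (C : nat -> X -> Prop) : Prop :=
  N <> Some 0%nat /\
  (forall n, inN N n -> (exists x, C n x) /\ Gamma (C n)) /\
  (forall n m x, inN N n -> inN N m -> C n x -> C m x -> n = m) /\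
  (forall x, exists n, inN N n /\ C n x).

Definition locally_in {X Y : Type} (F : (X -> Y) -> Prop) (N : option nat)
  (C : nat -> X -> Prop) (g : X -> Y) : Prop :=
  forall n, inN N n -> exists gn, F gn /\ forall x, C n x -> g x = gn x.

Definition is_constant {X Y : Type} (g : X -> Y) : Prop :=
  exists y, forall x, g x = y.

Definition is_lipschitz {X Y : Type} (dX : X -> X -> R) (dY : Y -> Y -> R)
  (g : X -> Y) : Prop :=
  exists L, 0 <= L /\ forall x y, dY (g x) (g y) <= L * dX x y.

Definition is_continuous {X Y : Type} (dX : X -> X -> R) (dY : Y -> Y -> R)
  (g : X -> Y) : Prop :=
  forall x e, 0 < e -> exists r, 0 < r /\ forall y, dX x y < r -> dY (g x) (g y) < e.

Definition Delta_succ_function {X Y : Type} (dX : X -> X -> R) (dY : Y -> Y -> R)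
  {W : Type} (lt : W -> W -> Prop) (xi : W) (g : X -> Y) : Prop :=
  forall A, Sigma0_succ dY lt xi A -> Sigma0_succ dX lt xi (fun x => A (g x)).

Definition approx_locally {X Y : Type} (dX : X -> X -> R) (dY : Y -> Y -> R)
  {W : Type} (lt : W -> W -> Prop) (xi : W) (F : (X -> Y) -> Prop)
  (f : X -> Y) : Prop :=
  exists fs : nat -> X -> Y,
    unif_converges dY fs f /\
    forall k, exists (N : option nat) (C : nat -> X -> Prop),
      is_partition (Sigma0_succ dX lt xi) N C /\ locally_in F N C (fs k).

(* Main.v *)
Require Import Defs.
From Stdlib Require Import Arith Wf_nat Reals Lra Lia Classical ClassicalEpsilon FunctionalExtensionality PropExtensionality Cantor.
Open Scope R_scope.

Lemma choice' {A B : Type} (P : A -> B -> Prop) :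
  (forall a, exists b, P a b) -> exists g : A -> B, forall a, P a (g a).
Proof.
  intros H. exists (fun a => proj1_sig (constructive_indefinite_description _ (H a))).
  intros a. exact (proj2_sig (constructive_indefinite_description _ (H a))).
Qed.

Lemma least_nat (P : nat -> Prop) : (exists n, P n) -> exists n, P n /\ forall m, (m < n)%nat -> ~ P m.
Proof.
  intros [n Hn]. revert Hn. induction n as [n IH] using (well_founded_induction Wf_nat.lt_wf).
  intros Hn. destruct (classic (exists m, (m < n)%nat /\ P m)) as [[m [Hm Pm]]|Hno].
  - exact (IH m Hm Pm).
  - exists n. split; [exact Hn|]. intros m Hm Pm. apply Hno. eauto.
Qed.

Lemma greatest_nat (P : nat -> Prop) n : (exists K, P K) -> (forall K, P K -> (K <= n)%nat) ->
  exists K, P K /\ forall K', P K' -> (K' <= K)%nat.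
Proof.
  revert P. induction n as [|n IH]; intros P [K0 HK0] Hb.
  - exists K0. split; [exact HK0|]. intros K' HK'. pose proof (Hb _ HK0). pose proof (Hb _ HK'). lia.
  - destruct (classic (P (S n))) as [HS|HS].
    + exists (S n). split; [exact HS|]. intros K' HK'. apply Hb; exact HK'.
    + apply IH. exists K0; exact HK0. intros K HK. pose proof (Hb _ HK).
      destruct (Nat.eq_dec K (S n)); [subst; contradiction|lia].
Qed.

Definition wle {W : Type} (lt : W -> W -> Prop) (a b : W) : Prop := lt a b \/ a = b.


Lemma wlt_irr {W} {lt : W -> W -> Prop} (hW : countable_wellorder lt) a : ~ lt a a.
Proof. destruct hW as [h _]. apply h. Qed.
Lemma wlt_trans {W} {lt : W -> W -> Prop} (hW : countable_wellorder lt) a b c : lt a b -> lt b c -> lt a c.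
Proof. destruct hW as [_ [h _]]. apply h. Qed.
Lemma wlt_total {W} {lt : W -> W -> Prop} (hW : countable_wellorder lt) a b : lt a b \/ a = b \/ lt b a.
Proof. destruct hW as [_ [_ [h _]]]. apply h. Qed.
Lemma wlt_wf {W} {lt : W -> W -> Prop} (hW : countable_wellorder lt) : well_founded lt.
Proof. destruct hW as [_ [_ [_ [h _]]]]. exact h. Qed.

Lemma wle_lt_trans {W} {lt : W -> W -> Prop} (hW : countable_wellorder lt) a b c : wle lt a b -> lt b c -> lt a c.
Proof. intros [h|h] h2; [eapply wlt_trans; eauto|subst; auto]. Qed.
Lemma wlt_le_trans {W} {lt : W -> W -> Prop} (hW : countable_wellorder lt) a b c : lt a b -> wle lt b c -> lt a c.
Proof. intros h [h2|h2]; [eapply wlt_trans; eauto|subst; auto]. Qed.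
Lemma wle_trans {W} {lt : W -> W -> Prop} (hW : countable_wellorder lt) a b c : wle lt a b -> wle lt b c -> wle lt a c.
Proof. intros [h|h] h2; [left; eapply wlt_le_trans; eauto|subst; auto]. Qed.
Lemma wle_refl {W} (lt : W -> W -> Prop) a : wle lt a a.
Proof. right; reflexivity. Qed.

Definition wmax {W} (lt : W -> W -> Prop) (a b : W) : W :=
  if excluded_middle_informative (lt a b) then b else a.
Lemma wmax_l {W} {lt : W -> W -> Prop} (hW : countable_wellorder lt) a b : wle lt a (wmax lt a b).
Proof. unfold wmax. destruct (excluded_middle_informative _); [left; auto|right; auto]. Qed.
Lemma wmax_r {W} {lt : W -> W -> Prop} (hW : countable_wellorder lt) a b : wle lt b (wmax lt a b).
Proof. unfold wmax. destruct (excluded_middle_informative _) as [h|h]; [right; auto|].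
  destruct (wlt_total hW a b) as [h1|[h1|h1]]; [contradiction|subst; right; auto|left; auto]. Qed.
Lemma wmax_cases {W} (lt : W -> W -> Prop) a b : wmax lt a b = a \/ wmax lt a b = b.
Proof. unfold wmax. destruct (excluded_middle_informative _); auto. Qed.

Lemma wf_min {W} {lt : W -> W -> Prop} (hW : countable_wellorder lt) (P : W -> Prop) w :
  P w -> exists m, P m /\ forall v, P v -> ~ lt v m.
Proof.
  revert w. intros w. induction w as [w IH] using (well_founded_induction (wlt_wf hW)).
  intros Hw. destruct (classic (exists v, lt v w /\ P v)) as [[v [h1 h2]]|Hno].
  - exact (IH v h1 h2).
  - exists w. split; auto. intros v Pv hv. apply Hno; eauto.
Qed.

Lemma one_exists {W} {lt : W -> W -> Prop} (hW : countable_wellorder lt) w0 :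
  ord_pos lt w0 -> exists o, is_one lt o /\ forall w, ord_pos lt w -> wle lt o w.
Proof.
  intros H0. destruct (wf_min hW (ord_pos lt) w0 H0) as [o [[z hz] Hmin]].
  exists o. split.
  - exists z. split; auto. intros v hv.
    destruct (wlt_total hW v z) as [h|[h|h]]; auto.
    + exfalso. apply (Hmin z); [exists v; auto|auto].
    + exfalso. apply (Hmin v); [exists z; auto|auto].
  - intros w Hw. destruct (wlt_total hW o w) as [h|[h|h]]; [left; auto|right; auto|].
    exfalso. apply (Hmin w Hw h).
Qed.

Lemma one_pos {W} {lt : W -> W -> Prop} o : is_one lt o -> ord_pos lt o.
Proof. intros [z [hz _]]. exists z; auto. Qed.

Lemma one_no_pos_below {W} {lt : W -> W -> Prop} (hW : countable_wellorder lt) o v :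
  is_one lt o -> lt v o -> ~ ord_pos lt v.
Proof.
  intros [z [hz Hu]] hv [u hu]. pose proof (Hu v hv). subst v.
  assert (lt u o) by (eapply wlt_trans; eauto). pose proof (Hu u H). subst u.
  eapply wlt_irr; eauto.
Qed.

Lemma pos_lt_pos {W} {lt : W -> W -> Prop} (hW : countable_wellorder lt) a b :
  ord_pos lt a -> lt a b -> ord_pos lt b.
Proof. intros _ h. exists a; auto. Qed.

Lemma notone_pos_below {W} {lt : W -> W -> Prop} (hW : countable_wellorder lt) w :
  ord_pos lt w -> ~ is_one lt w -> exists v, ord_pos lt v /\ lt v w.
Proof.
  intros Hp Hn. destruct (one_exists hW w Hp) as [o [Ho Hle]].
  exists o. split; [apply one_pos; auto|]. destruct (Hle w Hp) as [h|h]; auto.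
  subst; contradiction.
Qed.

Definition eps (n : nat) : R := / INR (S n).

Lemma eps_pos n : 0 < eps n.
Proof. unfold eps. apply Rinv_0_lt_compat. apply lt_0_INR. lia. Qed.

Lemma eps_small r : 0 < r -> exists n, eps n < r.
Proof.
  intros hr. destruct (archimed_cor1 r hr) as [N [h1 h2]].
  exists (pred N). unfold eps. replace (S (pred N)) with N by lia. exact h1.
Qed.

Lemma eps_anti k K : (k <= K)%nat -> eps K <= eps k.
Proof.
  intros h. unfold eps. apply Rinv_le_contravar. apply lt_0_INR; lia. apply le_INR; lia.
Qed.

Lemma md_nonneg {X} {d : X -> X -> R} (hd : is_metric d) x y : 0 <= d x y.
Proof. destruct hd as [h _]. apply h. Qed.
Lemma md_refl {X} {d : X -> X -> R} (hd : is_metric d) x : d x x = 0.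
Proof. destruct hd as [_ [h _]]. apply h. reflexivity. Qed.
Lemma md_sym {X} {d : X -> X -> R} (hd : is_metric d) x y : d x y = d y x.
Proof. destruct hd as [_ [_ [h _]]]. apply h. Qed.
Lemma md_tri {X} {d : X -> X -> R} (hd : is_metric d) x y z : d x z <= d x y + d y z.
Proof. destruct hd as [_ [_ [_ h]]]. apply h. Qed.

Lemma mopen_ext {X} {d : X -> X -> R} (A B : X -> Prop) : mopen d A -> (forall x, A x <-> B x) -> mopen d B.
Proof. intros H E x Bx. apply E in Bx. destruct (H x Bx) as [r [hr H2]]. exists r. split; auto.
  intros y hy. apply E. auto. Qed.

Lemma ball_open {X} {d : X -> X -> R} (hd : is_metric d) c r : mopen d (fun y => d c y < r).
Proof.
  intros y hy. exists (r - d c y). split; [lra|]. intros y' hy'.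
  pose proof (md_tri hd c y y'). lra.
Qed.

Lemma mopen_full {X} (d : X -> X -> R) : mopen d (fun _ => True).
Proof. intros x _. exists 1. split; [lra|auto]. Qed.
Lemma mopen_empty {X} (d : X -> X -> R) : mopen d (fun _ => False).
Proof. intros x []. Qed.

Lemma mopen_union {X} {d : X -> X -> R} (A : nat -> X -> Prop) :
  (forall n, mopen d (A n)) -> mopen d (fun x => exists n, A n x).
Proof. intros H x [n hn]. destruct (H n x hn) as [r [hr H2]]. exists r; split; auto.
  intros y hy. exists n; auto. Qed.

Lemma mopen_inter {X} {d : X -> X -> R} (A B : X -> Prop) :
  mopen d A -> mopen d B -> mopen d (fun x => A x /\ B x).
Proof. intros HA HB x [a b]. destruct (HA x a) as [r [hr H1]]. destruct (HB x b) as [s [hs H2]].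
  exists (Rmin r s). split; [apply Rmin_glb_lt; auto|]. intros y hy.
  split; [apply H1|apply H2]; pose proof (Rmin_l r s); pose proof (Rmin_r r s); lra. Qed.

Definition CF {X} (d : X -> X -> R) (U : X -> Prop) (n : nat) (x : X) : Prop :=
  forall y, ~ U y -> eps n <= d x y.

Lemma CF_compl_open {X} {d : X -> X -> R} (hd : is_metric d) U n :
  mopen d (fun x => ~ CF d U n x).
Proof.
  intros x hx. unfold CF in hx. apply not_all_ex_not in hx. destruct hx as [y hy].
  apply imply_to_and in hy. destruct hy as [hy1 hy2]. apply Rnot_le_lt in hy2.
  exists (eps n - d x y). split; [lra|]. intros x' hx' Hc.
  pose proof (Hc y hy1). pose proof (md_tri hd x' x y). rewrite (md_sym hd x' x) in H0. lra.
Qed.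

Lemma open_union_CF {X} {d : X -> X -> R} (hd : is_metric d) U :
  mopen d U -> forall x, U x <-> exists n, CF d U n x.
Proof.
  intros HU x. split.
  - intros hx. destruct (HU x hx) as [r [hr H]]. destruct (eps_small r hr) as [n hn].
    exists n. intros y hy. apply Rnot_lt_le. intros hl. apply hy, H. lra.
  - intros [n hn]. apply NNPP. intros hx. pose proof (hn x hx). rewrite (md_refl hd) in H.
    pose proof (eps_pos n). lra.
Qed.

Definition NB {X} (d : X -> X -> R) (P : X -> Prop) (l : nat) (x : X) : Prop :=
  exists z, ~ P z /\ d x z < eps l.

Lemma NB_open {X} {d : X -> X -> R} (hd : is_metric d) P l : mopen d (NB d P l).
Proof.
  intros x [z [hz hxz]]. exists (eps l - d x z). split; [lra|]. intros y hy.
  exists z. split; auto. pose proof (md_tri hd y x z). rewrite (md_sym hd y x) in H. lra.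
Qed.

Lemma closed_inter_NB {X} {d : X -> X -> R} (hd : is_metric d) P :
  mopen d P -> forall x, ~ P x <-> forall l, NB d P l x.
Proof.
  intros HP x. split.
  - intros hx l. exists x. split; auto. rewrite (md_refl hd). apply eps_pos.
  - intros H hx. destruct (HP x hx) as [r [hr H2]]. destruct (eps_small r hr) as [l hl].
    destruct (H l) as [z [hz hxz]]. apply hz, H2. lra.
Qed.

Lemma Sigma0_ext {X} {d : X -> X -> R} {W} {lt : W -> W -> Prop} e (A B : X -> Prop) :
  Sigma0 d lt e A -> (forall x, A x <-> B x) -> Sigma0 d lt e B.
Proof.
  intros H E. destruct H as [e A Hone Hop | e A F eta H1 H2 H3].
  - apply Sigma0_open; auto. eapply mopen_ext; eauto.
  - eapply Sigma0_union; eauto. intros x. rewrite <- E. auto.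
Qed.

Lemma Sigma0_pos {X} {d : X -> X -> R} {W} {lt : W -> W -> Prop} e A :
  Sigma0 d lt e A -> ord_pos lt e.
Proof.
  intros H. destruct H as [e A Hone Hop | e A F eta H1 H2 H3].
  - apply one_pos; auto.
  - exists (eta 0%nat). apply H1.
Qed.

Lemma Sigma0_one_open {X} {d : X -> X -> R} {W} {lt : W -> W -> Prop} (hW : countable_wellorder lt) e A :
  Sigma0 d lt e A -> is_one lt e -> mopen d A.
Proof.
  intros H Ho. destruct H as [e A Hone Hop | e A F eta H1 H2 H3]; auto.
  exfalso. destruct (H1 0%nat) as [hp hl]. eapply one_no_pos_below; eauto.
Qed.

Lemma Sigma0_notone_rep {X} {d : X -> X -> R} {W} {lt : W -> W -> Prop} e A :
  Sigma0 d lt e A -> ~ is_one lt e ->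
  exists (F : nat -> X -> Prop) (eta : nat -> W),
    (forall n, ord_pos lt (eta n) /\ lt (eta n) e) /\
    (forall n, Sigma0 d lt (eta n) (fun x => ~ F n x)) /\
    (forall x, A x <-> exists n, F n x).
Proof.
  intros H Ho. destruct H as [e A Hone Hop | e A F eta H1 H2 H3]; [contradiction|eauto 10].
Qed.

Lemma Sigma0_mono {X} {d : X -> X -> R} (hd : is_metric d) {W} {lt : W -> W -> Prop} (hW : countable_wellorder lt) e z A :
  Sigma0 d lt e A -> wle lt e z -> Sigma0 d lt z A.
Proof.
  intros H [hl|hl]; [|subst; auto].
  destruct H as [e A Hone Hop | e A F eta H1 H2 H3].
  - apply (Sigma0_union d lt z A (CF d A) (fun _ => e)).
    + intros n. split; auto. apply one_pos; auto.
    + intros n. apply Sigma0_open; auto. apply CF_compl_open; auto.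
    + apply open_union_CF; auto.
  - apply (Sigma0_union d lt z A F eta); auto.
    intros n. destruct (H1 n). split; auto. eapply wlt_trans; eauto.
Qed.

Lemma Sigma0_of_open {X} {d : X -> X -> R} (hd : is_metric d) {W} {lt : W -> W -> Prop} (hW : countable_wellorder lt) e A :
  mopen d A -> ord_pos lt e -> Sigma0 d lt e A.
Proof.
  intros HA He. destruct (one_exists hW e He) as [o [Ho Hle]].
  apply (Sigma0_mono hd hW o); auto. apply Sigma0_open; auto.
Qed.

Lemma Sigma0_union_n {X} {d : X -> X -> R} (hd : is_metric d) {W} {lt : W -> W -> Prop} (hW : countable_wellorder lt) e
  (A : nat -> X -> Prop) :
  (forall n, Sigma0 d lt e (A n)) -> Sigma0 d lt e (fun x => exists n, A n x).
Proof.
  intros H. destruct (classic (is_one lt e)) as [Ho|Ho].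
  - apply Sigma0_open; auto. apply mopen_union. intros n. eapply Sigma0_one_open; eauto.
  - assert (Hr : forall n, exists p : (nat -> X -> Prop) * (nat -> W),
       (forall m, ord_pos lt (snd p m) /\ lt (snd p m) e) /\
       (forall m, Sigma0 d lt (snd p m) (fun x => ~ fst p m x)) /\
       (forall x, A n x <-> exists m, fst p m x)).
    { intros n. destruct (Sigma0_notone_rep e (A n) (H n) Ho) as [F [eta [h1 [h2 h3]]]].
      exists (F, eta). simpl. auto. }
    destruct (choice' _ Hr) as [g Hg].
    apply (Sigma0_union d lt e _ (fun k => fst (g (fst (of_nat k))) (snd (of_nat k)))
                                 (fun k => snd (g (fst (of_nat k))) (snd (of_nat k)))).
    + intros k. apply (proj1 (Hg _)).
    + intros k. apply (proj1 (proj2 (Hg _))).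
    + intros x. split.
      * intros [n hn]. apply (proj2 (proj2 (Hg n))) in hn. destruct hn as [m hm].
        exists (to_nat (n, m)). rewrite cancel_of_to. simpl. exact hm.
      * intros [k hk]. exists (fst (of_nat k)). apply (proj2 (proj2 (Hg _))). eauto.
Qed.

Lemma Sigma0_or {X} {d : X -> X -> R} (hd : is_metric d) {W} {lt : W -> W -> Prop} (hW : countable_wellorder lt) e A B :
  Sigma0 d lt e A -> Sigma0 d lt e B -> Sigma0 d lt e (fun x => A x \/ B x).
Proof.
  intros HA HB.
  apply (Sigma0_ext e (fun x => exists n, (match n with O => A | S _ => B end) x)).
  - apply Sigma0_union_n; auto. intros [|n]; auto.
  - intros x. split.
    + intros [[|n] h]; auto.
    + intros [h|h]; [exists O|exists 1%nat]; auto.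
Qed.

Lemma SS_ext {X} {d : X -> X -> R} {W} {lt : W -> W -> Prop} xi (A B : X -> Prop) :
  Sigma0_succ d lt xi A -> (forall x, A x <-> B x) -> Sigma0_succ d lt xi B.
Proof.
  intros [F [eta [h1 [h2 h3]]]] E. exists F, eta. split; [exact h1|split; [exact h2|]].
  intros x. rewrite <- E. apply h3.
Qed.

Lemma SS_of_Sigma0 {X} {d : X -> X -> R} (hd : is_metric d) {W} {lt : W -> W -> Prop} (hW : countable_wellorder lt) e xi A :
  Sigma0 d lt e A -> wle lt e xi -> Sigma0_succ d lt xi A.
Proof.
  intros H Hle. destruct (classic (is_one lt e)) as [Ho|Ho].
  - pose proof (Sigma0_one_open hW e A H Ho) as HA.
    exists (CF d A), (fun _ => e). split; [|split].
    + intros n. split; [apply one_pos; auto|destruct Hle; auto].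
    + intros n. apply Sigma0_open; auto. apply CF_compl_open; auto.
    + apply open_union_CF; auto.
  - destruct (Sigma0_notone_rep e A H Ho) as [F [eta [h1 [h2 h3]]]].
    exists F, eta. split; [|split]; auto.
    intros n. split; [apply h1|]. left. eapply wlt_le_trans; eauto. apply h1.
Qed.

Lemma SS_of_coSigma0 {X} {d : X -> X -> R} {W} {lt : W -> W -> Prop} e xi A :
  Sigma0 d lt e A -> wle lt e xi -> Sigma0_succ d lt xi (fun x => ~ A x).
Proof.
  intros H Hle. exists (fun _ x => ~ A x), (fun _ => e). split; [|split].
  - intros n. split; [eapply Sigma0_pos; eauto|destruct Hle; auto].
  - intros n. eapply Sigma0_ext; eauto. intros x; split; [intros h h2; auto|apply NNPP].
  - intros x. split; [intros h; exists O; auto|intros [_ h]; auto].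
Qed.

Lemma SS_of_open {X} {d : X -> X -> R} (hd : is_metric d) {W} {lt : W -> W -> Prop} (hW : countable_wellorder lt) xi A :
  mopen d A -> ord_pos lt xi -> Sigma0_succ d lt xi A.
Proof.
  intros HA Hp. apply (SS_of_Sigma0 hd hW xi); [|apply wle_refl]. apply Sigma0_of_open; auto.
Qed.

Lemma SS_pos {X} {d : X -> X -> R} {W} {lt : W -> W -> Prop} (hW : countable_wellorder lt) xi A :
  Sigma0_succ d lt xi A -> ord_pos lt xi.
Proof.
  intros [F [eta [h1 _]]]. destruct (h1 O) as [[z hz] [h|h]].
  - exists (eta O); auto.
  - rewrite <- h. exists z; auto.
Qed.

Lemma SS_union_n {X} {d : X -> X -> R} {W} {lt : W -> W -> Prop} xi (A : nat -> X -> Prop) :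
  (forall n, Sigma0_succ d lt xi (A n)) -> Sigma0_succ d lt xi (fun x => exists n, A n x).
Proof.
  intros H.
  assert (Hr : forall n, exists p : (nat -> X -> Prop) * (nat -> W),
     (forall m, ord_pos lt (snd p m) /\ (lt (snd p m) xi \/ snd p m = xi)) /\
     (forall m, Sigma0 d lt (snd p m) (fun x => ~ fst p m x)) /\
     (forall x, A n x <-> exists m, fst p m x)).
  { intros n. destruct (H n) as [F [eta [h1 [h2 h3]]]]. exists (F, eta). simpl. auto. }
  destruct (choice' _ Hr) as [g Hg].
  exists (fun k => fst (g (fst (of_nat k))) (snd (of_nat k))),
         (fun k => snd (g (fst (of_nat k))) (snd (of_nat k))). split; [|split].
  - intros k. apply (proj1 (Hg _)).
  - intros k. apply (proj1 (proj2 (Hg _))).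
  - intros x. split.
  + intros [n hn]. apply (proj2 (proj2 (Hg n))) in hn. destruct hn as [m hm].
    exists (to_nat (n, m)). rewrite cancel_of_to. simpl. exact hm.
  + intros [k hk]. exists (fst (of_nat k)). apply (proj2 (proj2 (Hg _))). eauto.
Qed.

Lemma SS_or {X} {d : X -> X -> R} {W} {lt : W -> W -> Prop} xi A B :
  Sigma0_succ d lt xi A -> Sigma0_succ d lt xi B -> Sigma0_succ d lt xi (fun x => A x \/ B x).
Proof.
  intros HA HB.
  apply (SS_ext xi (fun x => exists n, (match n with O => A | S _ => B end) x)).
  - apply SS_union_n; auto. intros [|n]; auto.
  - intros x. split.
    + intros [[|n] h]; auto.
    + intros [h|h]; [exists O|exists 1%nat]; auto.
Qed.

Lemma SS_and {X} {d : X -> X -> R} (hd : is_metric d) {W} {lt : W -> W -> Prop} (hW : countable_wellorder lt) xi A B :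
  Sigma0_succ d lt xi A -> Sigma0_succ d lt xi B -> Sigma0_succ d lt xi (fun x => A x /\ B x).
Proof.
  intros [F [eta [h1 [h2 h3]]]] [G [zeta [g1 [g2 g3]]]].
  exists (fun k x => F (fst (of_nat k)) x /\ G (snd (of_nat k)) x),
         (fun k => wmax lt (eta (fst (of_nat k))) (zeta (snd (of_nat k)))). split; [|split].
  - intros k.
    destruct (wmax_cases lt (eta (fst (of_nat k))) (zeta (snd (of_nat k)))) as [e|e]; rewrite e;
      [apply h1|apply g1].
  - intros k. apply (Sigma0_ext _ (fun x => ~ F (fst (of_nat k)) x \/ ~ G (snd (of_nat k)) x)).
    + apply Sigma0_or; auto.
      * eapply Sigma0_mono; eauto. apply wmax_l; auto.
      * eapply Sigma0_mono; eauto. apply wmax_r; auto.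
    + intros x. tauto.
  - intros x. split.
    + intros [ha hb]. apply h3 in ha. apply g3 in hb. destruct ha as [n hn]. destruct hb as [m hm].
      exists (to_nat (n, m)). rewrite cancel_of_to. simpl. auto.
    + intros [k [hk1 hk2]]. split; [apply h3|apply g3]; eauto.
Qed.

Lemma SS_to_Sigma0 {X} {d : X -> X -> R} (hd : is_metric d) {W} {lt : W -> W -> Prop} (hW : countable_wellorder lt) e xi A :
  Sigma0_succ d lt e A -> lt e xi -> Sigma0 d lt xi A.
Proof.
  intros [F [eta [h1 [h2 h3]]]] hl. apply (Sigma0_union d lt xi A F eta); auto.
  intros n. destruct (h1 n) as [p q]. split; auto. eapply wle_lt_trans; eauto.
Qed.

Lemma SS_mono {X} {d : X -> X -> R} {W} {lt : W -> W -> Prop} (hW : countable_wellorder lt) e xi A :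
  Sigma0_succ d lt e A -> wle lt e xi -> Sigma0_succ d lt xi A.
Proof.
  intros [F [eta [h1 [h2 h3]]]] hl. exists F, eta. split; [|split]; auto.
  intros n. split; [apply h1|]. destruct (h1 n) as [_ q]. apply (wle_trans hW _ e); auto.
Qed.

Lemma Sigma0_preimage {X Y} {dX : X -> X -> R} {dY : Y -> Y -> R} {W} {lt : W -> W -> Prop}
  (g : X -> Y) : is_continuous dX dY g ->
  forall e A, Sigma0 dY lt e A -> Sigma0 dX lt e (fun x => A (g x)).
Proof.
  intros Hg e A H. induction H as [e A Hone Hop | e A F eta H1 H2 IH H3].
  - apply Sigma0_open; auto. intros x hx. destruct (Hop (g x) hx) as [r [hr Hr]].
    destruct (Hg x r hr) as [s [hs Hs]]. exists s. split; auto.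
  - apply (Sigma0_union dX lt e _ (fun n x => F n (g x)) eta); auto.
Qed.

Lemma SS_preimage {X Y} {dX : X -> X -> R} {dY : Y -> Y -> R} {W} {lt : W -> W -> Prop}
  (g : X -> Y) : is_continuous dX dY g ->
  forall xi A, Sigma0_succ dY lt xi A -> Sigma0_succ dX lt xi (fun x => A (g x)).
Proof.
  intros Hg xi A [F [eta [h1 [h2 h3]]]]. exists (fun n x => F n (g x)), eta. split; [exact h1|split].
  - intros n. apply (Sigma0_preimage g Hg _ _ (h2 n)).
  - intros x. apply h3.
Qed.

Definition DD {X} (d : X -> X -> R) {W} (lt : W -> W -> Prop) (z : W) (A : X -> Prop) : Prop :=
  Sigma0_succ d lt z A /\ Sigma0_succ d lt z (fun x => ~ A x).

Lemma DD_ext {X} {d : X -> X -> R} {W} {lt : W -> W -> Prop} z (A B : X -> Prop) :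
  DD d lt z A -> (forall x, A x <-> B x) -> DD d lt z B.
Proof.
  intros [h1 h2] E. split; [apply (SS_ext z A B h1)|apply (SS_ext z _ _ h2)]; intros x; specialize (E x); tauto.
Qed.

Lemma DD_compl {X} {d : X -> X -> R} {W} {lt : W -> W -> Prop} z A :
  DD d lt z A -> DD d lt z (fun x => ~ A x).
Proof.
  intros [h1 h2]. split; auto. apply (SS_ext z A); auto. intros x; split; [intros h h'; auto|apply NNPP].
Qed.

Lemma DD_and {X} {d : X -> X -> R} (hd : is_metric d) {W} {lt : W -> W -> Prop} (hW : countable_wellorder lt) z A B :
  DD d lt z A -> DD d lt z B -> DD d lt z (fun x => A x /\ B x).
Proof.
  intros [a1 a2] [b1 b2]. split.
  - apply SS_and; auto.
  - eapply SS_ext. apply (SS_or z _ _ a2 b2). intros x. tauto.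
Qed.

Lemma DD_or {X} {d : X -> X -> R} (hd : is_metric d) {W} {lt : W -> W -> Prop} (hW : countable_wellorder lt) z A B :
  DD d lt z A -> DD d lt z B -> DD d lt z (fun x => A x \/ B x).
Proof.
  intros ha hb. eapply DD_ext. apply DD_compl. apply (DD_and hd hW z _ _ (DD_compl z A ha) (DD_compl z B hb)).
  intros x. tauto.
Qed.

Lemma DD_full {X} {d : X -> X -> R} (hd : is_metric d) {W} {lt : W -> W -> Prop} (hW : countable_wellorder lt) z :
  ord_pos lt z -> DD d lt z (fun _ => True).
Proof.
  intros hz. split.
  - apply SS_of_open; auto. apply mopen_full.
  - eapply SS_ext. apply (SS_of_open hd hW z (fun _ => False)); auto. apply mopen_empty. intros x; tauto.
Qed.

Lemma DD_empty {X} {d : X -> X -> R} (hd : is_metric d) {W} {lt : W -> W -> Prop} (hW : countable_wellorder lt) z :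
  ord_pos lt z -> DD d lt z (fun _ => False).
Proof.
  intros hz. eapply DD_ext. apply DD_compl. apply (DD_full hd hW z hz). intros x; tauto.
Qed.

Lemma DD_mono {X} {d : X -> X -> R} {W} {lt : W -> W -> Prop} (hW : countable_wellorder lt) e z A :
  DD d lt e A -> wle lt e z -> DD d lt z A.
Proof. intros [h1 h2] hl. split; eapply SS_mono; eauto. Qed.

Lemma DD_of_Sigma0 {X} {d : X -> X -> R} (hd : is_metric d) {W} {lt : W -> W -> Prop} (hW : countable_wellorder lt) e z A :
  Sigma0 d lt e A -> wle lt e z -> DD d lt z A.
Proof. intros H hl. split; [eapply SS_of_Sigma0; eauto|eapply SS_of_coSigma0; eauto]. Qed.

Lemma DD_forall_le {X} {d : X -> X -> R} (hd : is_metric d) {W} {lt : W -> W -> Prop} (hW : countable_wellorder lt) z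
  (Sf : nat -> X -> Prop) n : ord_pos lt z ->
  (forall l, (l <= n)%nat -> DD d lt z (Sf l)) -> DD d lt z (fun x => forall l, (l <= n)%nat -> Sf l x).
Proof.
  intros hz. induction n as [|n IH]; intros H.
  - eapply DD_ext. apply (H O); lia. intros x. split; [intros h l hl; replace l with O by lia; auto|intros h; apply h; lia].
  - apply (DD_ext z (fun x => (forall l, (l <= n)%nat -> Sf l x) /\ Sf (S n) x)).
    { apply (DD_and hd hW). apply IH. intros l hl; apply H; lia. apply (H (S n)); lia. }
    intros x. split.
    + intros [h1 h2] l hl. destruct (Nat.eq_dec l (S n)); [subst; auto|apply h1; lia].
    + intros h. split; [intros l hl; apply h; lia|apply h; lia].
Qed.

Lemma DD_forall_lt {X} {d : X -> X -> R} (hd : is_metric d) {W} {lt : W -> W -> Prop} (hW : countable_wellorder lt) z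
  (Sf : nat -> X -> Prop) n : ord_pos lt z ->
  (forall l, (l < n)%nat -> DD d lt z (Sf l)) -> DD d lt z (fun x => forall l, (l < n)%nat -> Sf l x).
Proof.
  intros hz. destruct n as [|n]; intros H.
  - eapply DD_ext. apply (DD_full hd hW z hz). intros x; split; [intros _ l hl; lia|auto].
  - eapply DD_ext. { apply (DD_forall_le hd hW z Sf n hz). intros l hl; apply H; lia. }
    intros x; split; intros h l hl; apply h; lia.
Qed.

Definition Meas {X Y} (dX : X -> X -> R) (dY : Y -> Y -> R) {W} (lt : W -> W -> Prop) (xi : W) (f : X -> Y) : Prop :=
  forall U, mopen dY U -> Sigma0_succ dX lt xi (fun x => U (f x)).

Definition bdec (P : Prop) : bool := if excluded_middle_informative P then true else false.
Lemma bdec_true P : P -> bdec P = true.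
Proof. unfold bdec; destruct (excluded_middle_informative P); auto; contradiction. Qed.
Lemma bdec_false P : ~ P -> bdec P = false.
Proof. unfold bdec; destruct (excluded_middle_informative P); auto; contradiction. Qed.

Definition upd (b : nat -> bool) (m : nat) (v : bool) : nat -> bool :=
  fun t => if Nat.eqb t m then v else b t.

Lemma bool_meas {X} {d : X -> X -> R} (hd : is_metric d) {W} {lt : W -> W -> Prop} (hW : countable_wellorder lt) z
  (T : nat -> X -> Prop) : ord_pos lt z ->
  forall m (Phi : (nat -> bool) -> Prop),
  (forall b b', (forall t, (t < m)%nat -> b t = b' t) -> (Phi b <-> Phi b')) ->
  (forall t, (t < m)%nat -> DD d lt z (T t)) ->
  DD d lt z (fun x => Phi (fun t => bdec (T t x))).
Proof.
  intros hz m. induction m as [|m IH]; intros Phi HPhi HT.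
  - destruct (classic (Phi (fun _ => false))) as [h|h].
    + eapply DD_ext. apply (DD_full hd hW z hz). intros x. split; auto. intros _.
      apply (HPhi (fun _ => false)); auto. intros t ht; lia.
    + eapply DD_ext. apply (DD_empty hd hW z hz). intros x. split; [tauto|]. intros hx. apply h.
      apply (HPhi (fun t => bdec (T t x))); auto. intros t ht; lia.
  - assert (H1 : DD d lt z (fun x => (fun b => Phi (upd b m true)) (fun t => bdec (T t x)))).
    { apply (IH (fun b => Phi (upd b m true))). intros b b' hb. apply HPhi. intros t ht. unfold upd.
      destruct (Nat.eqb t m) eqn:E; auto. apply Nat.eqb_neq in E. apply hb. lia.
      intros t ht; apply HT; lia. }
    assert (H0 : DD d lt z (fun x => (fun b => Phi (upd b m false)) (fun t => bdec (T t x)))).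
    { apply (IH (fun b => Phi (upd b m false))). intros b b' hb. apply HPhi. intros t ht. unfold upd.
      destruct (Nat.eqb t m) eqn:E; auto. apply Nat.eqb_neq in E. apply hb. lia.
      intros t ht; apply HT; lia. }
    apply (DD_ext z (fun x => (T m x /\ Phi (upd (fun t => bdec (T t x)) m true)) \/
                             (~ T m x /\ Phi (upd (fun t => bdec (T t x)) m false)))).
    + assert (HTm : DD d lt z (T m)) by (apply HT; lia).
      apply (DD_or hd hW); apply (DD_and hd hW); auto. apply DD_compl; auto.
    + intros x. assert (Hs : forall v, bdec (T m x) = v ->
           (Phi (upd (fun t => bdec (T t x)) m v) <-> Phi (fun t => bdec (T t x)))).
      { intros v hv. apply HPhi. intros t ht. unfold upd. destruct (Nat.eqb t m) eqn:E; auto.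
        apply Nat.eqb_eq in E. subst. auto. }
      destruct (classic (T m x)) as [h|h].
      * rewrite <- (Hs true (bdec_true _ h)). tauto.
      * rewrite <- (Hs false (bdec_false _ h)). tauto.
Qed.

(* ---- reindexing a family of sets into an honest partition ---- *)
Lemma reindex_fin (J : nat -> Prop) m : (forall t, (m <= t)%nat -> ~ J t) -> (exists t, J t) ->
  exists p (sg : nat -> nat), (1 <= p)%nat /\ (forall n, (n < p)%nat -> J (sg n)) /\
    (forall n n', (n < p)%nat -> (n' < p)%nat -> sg n = sg n' -> n = n') /\
    (forall t, J t -> exists n, (n < p)%nat /\ sg n = t).
Proof.
  revert J. induction m as [|m IH]; intros J Hb Hex.
  - destruct Hex as [t ht]. exfalso. apply (Hb t); auto; lia.
  - destruct (classic (J m)) as [hm|hm].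
    + destruct (classic (exists t, (t < m)%nat /\ J t)) as [[t0 [ht0 Jt0]]|hno].
      * destruct (IH (fun t => (t < m)%nat /\ J t)) as [p [sg [h1 [h2 [h3 h4]]]]].
        { intros t ht [h h']; lia. }
        { eauto. }
        exists (S p), (fun n => if Nat.eqb n p then m else sg n). split; [lia|split; [|split]].
        -- intros n hn. destruct (Nat.eqb n p) eqn:E; auto. apply Nat.eqb_neq in E. apply h2; lia.
        -- intros n n' hn hn' he. destruct (Nat.eqb n p) eqn:E; destruct (Nat.eqb n' p) eqn:E'.
           ++ apply Nat.eqb_eq in E; apply Nat.eqb_eq in E'; lia.
           ++ apply Nat.eqb_neq in E'. assert (hh := h2 n' ltac:(lia)). rewrite <- he in hh. lia.
           ++ apply Nat.eqb_neq in E. assert (hh := h2 n ltac:(lia)). rewrite he in hh. lia.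
           ++ apply Nat.eqb_neq in E; apply Nat.eqb_neq in E'. apply h3; auto; lia.
        -- intros t Jt. destruct (Nat.lt_trichotomy t m) as [hl|[hl|hl]].
           ++ destruct (h4 t (conj hl Jt)) as [n [hn hsn]]. exists n. split; [lia|].
              destruct (Nat.eqb n p) eqn:E; [apply Nat.eqb_eq in E; lia|auto].
           ++ exists p. split; [lia|]. rewrite Nat.eqb_refl. auto.
           ++ exfalso. apply (Hb t); auto; lia.
      * exists 1%nat, (fun _ => m). split; [lia|split; [|split]].
        -- intros; auto.
        -- intros; lia.
        -- intros t Jt. exists O. split; [lia|]. destruct (Nat.lt_trichotomy t m) as [hl|[hl|hl]]; auto.
           ++ exfalso; apply hno; eauto.
           ++ exfalso. apply (Hb t); auto; lia.
    + apply IH; auto. intros t ht. destruct (Nat.eq_dec t m); [subst; auto|apply Hb; lia].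
Qed.

Lemma reindex (J : nat -> Prop) : (exists t, J t) ->
  exists (N : option nat) (sg : nat -> nat), N <> Some O /\ (forall n, inN N n -> J (sg n)) /\
    (forall n n', inN N n -> inN N n' -> sg n = sg n' -> n = n') /\
    (forall t, J t -> exists n, inN N n /\ sg n = t).
Proof.
  intros Hex. destruct (classic (forall m, exists t, (m <= t)%nat /\ J t)) as [Hinf|Hfin].
  - assert (Hn : forall m, exists t, ((m <= t)%nat /\ J t) /\ forall s, (s < t)%nat -> ~ ((m <= s)%nat /\ J s)).
    { intros m. apply least_nat. apply Hinf. }
    destruct (choice' _ Hn) as [nx Hnx].
    set (sg := fix sg (n : nat) : nat := match n with O => nx O | S n => nx (S (sg n)) end).
    assert (HJ : forall n, J (sg n)). { intros [|n]; simpl; apply (Hnx _). }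
    assert (Hinc : forall n, (sg n < sg (S n))%nat). { intros n. simpl. destruct (Hnx (S (sg n))) as [[h _] _]. lia. }
    assert (Hmono : forall n n', (n < n')%nat -> (sg n < sg n')%nat).
    { intros n n' h. induction h. apply Hinc. pose proof (Hinc m). lia. }
    assert (Hge : forall n, (n <= sg n)%nat). { induction n; [lia|]. pose proof (Hinc n). lia. }
    exists None, sg. split; [discriminate|split; [intros n _; auto|split]].
    + intros n n' _ _ he. destruct (Nat.lt_trichotomy n n') as [h|[h|h]]; auto;
        apply Hmono in h; lia.
    + intros t Jt.
      destruct (greatest_nat (fun n => (sg n <= t)%nat) t) as [n [hn hmax]].
      * exists O. simpl. destruct (Hnx O) as [_ hmin]. destruct (Nat.le_gt_cases (nx O) t); auto.
        exfalso. apply (hmin t); auto. split; auto; lia.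
      * intros K hK. pose proof (Hge K). lia.
      * exists n. split; [exact I|]. destruct (Nat.eq_dec (sg n) t) as [e|e]; auto. exfalso.
        assert (sg (S n) <= t)%nat.
        { simpl. destruct (Hnx (S (sg n))) as [_ hmin]. destruct (Nat.le_gt_cases (nx (S (sg n))) t); auto.
          exfalso. apply (hmin t); auto. split; auto; lia. }
        pose proof (hmax (S n) H). lia.
  - apply not_all_ex_not in Hfin. destruct Hfin as [m hm].
    destruct (reindex_fin J m) as [p [sg [h1 [h2 [h3 h4]]]]]; auto.
    { intros t ht Jt. apply hm. eauto. }
    exists (Some p), sg. split; [intros e; inversion e; lia|]. split; [|split]; auto.
Qed.

Definition NBr {X} (d : X -> X -> R) (P : X -> Prop) (r : R) (x : X) : Prop :=
  exists z, ~ P z /\ d x z < r.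

Lemma NBr_open {X} {d : X -> X -> R} (hd : is_metric d) P r : mopen d (NBr d P r).
Proof.
  intros x [z [hz hxz]]. exists (r - d x z). split; [lra|]. intros y hy.
  exists z. split; auto. pose proof (md_tri hd y x z). rewrite (md_sym hd y x) in H. lra.
Qed.

Lemma Baire_Meas {X Y} {dX : X -> X -> R} {dY : Y -> Y -> R} (hX : is_metric dX) (hY : is_metric dY)
  {W} {lt : W -> W -> Prop} (hW : countable_wellorder lt) xi f :
  Baire dX dY lt xi f -> Meas dX dY lt xi f.
Proof.
  intros H. induction H as [xi f Hone HU | xi f fs eta Hpos Hb IH Hconv]; [exact HU|].
  intros U HU.
  set (Om := fun m => NBr dY U (2 * eps m)).
  exists (fun p x => forall n, ~ Om (fst (of_nat p)) (fs (n + snd (of_nat p))%nat x)), (fun _ => xi).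
  split; [|split].
  - intros _. split; [exists (eta O); apply Hpos|right; auto].
  - intros p. apply (Sigma0_ext xi (fun x => exists n, Om (fst (of_nat p)) (fs (n + snd (of_nat p))%nat x))).
    + apply (Sigma0_union_n hX hW). intros n. apply (SS_to_Sigma0 hX hW (eta (n + snd (of_nat p))%nat)).
      * apply IH. apply NBr_open; auto.
      * apply Hpos.
    + intros x. split.
      * intros [n hn] h. apply (h n hn).
      * intros h. apply NNPP. intros h2. apply h. intros n hn. apply h2. eauto.
  - intros x. split.
    + intros hx. destruct (HU _ hx) as [rho [hrho Hr]].
      destruct (eps_small (rho / 3)) as [m hm]; [lra|].
      destruct (Hconv x (eps m) (eps_pos m)) as [N HN].
      exists (to_nat (m, N)). rewrite cancel_of_to. simpl. intros n [z [hz hd]].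
      assert (hfz : rho <= dY (f x) z). { apply Rnot_lt_le. intros h. apply hz. apply Hr. auto. }
      pose proof (HN (n + N)%nat ltac:(lia)). pose proof (md_tri hY (f x) (fs (n + N)%nat x) z).
      rewrite (md_sym hY (f x) (fs (n+N)%nat x)) in H0. lra.
    + intros [p hp]. apply NNPP. intros hx.
      destruct (Hconv x (2 * eps (fst (of_nat p)))) as [N HN]. pose proof (eps_pos (fst (of_nat p))); lra.
      apply (hp N). exists (f x). split; auto. apply HN. lia.
Qed.

Lemma unif_Meas {X Y} {dX : X -> X -> R} {dY : Y -> Y -> R} (hX : is_metric dX) (hY : is_metric dY)
  {W} {lt : W -> W -> Prop} (hW : countable_wellorder lt) xi (fs : nat -> X -> Y) f :
  unif_converges dY fs f -> (forall k, Meas dX dY lt xi (fs k)) -> Meas dX dY lt xi f.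
Proof.
  intros Hu HM U HU.
  assert (Hk : forall m, exists k, forall x, dY (fs k x) (f x) < eps m).
  { intros m. destruct (Hu (eps m) (eps_pos m)) as [N HN]. exists N. intros x. apply HN. lia. }
  destruct (choice' _ Hk) as [kk Hkk].
  set (V := fun m y => exists r, 2 * eps m < r /\ forall z, ~ U z -> r <= dY y z).
  assert (HV : forall m, mopen dY (V m)).
  { intros m y [r [hr Hr]]. exists ((r - 2 * eps m) / 2). split; [lra|]. intros y' hy'.
    exists (r - (r - 2 * eps m) / 2). split; [lra|]. intros z hz. pose proof (Hr z hz).
    pose proof (md_tri hY y y' z). lra. }
  apply (SS_ext xi (fun x => exists m, V m (fs (kk m) x))).
  - apply SS_union_n. intros m. apply HM. apply HV.
  - intros x. split.
    + intros [m [r [hr Hr]]]. apply NNPP. intros hx. pose proof (Hr (f x) hx).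
      pose proof (Hkk m x). pose proof (eps_pos m). lra.
    + intros hx. destruct (HU _ hx) as [rho [hrho Hr]].
      destruct (eps_small (rho / 4)) as [m hm]; [lra|]. exists m. exists (rho - eps m). split.
      * pose proof (eps_pos m); lra.
      * intros z hz. assert (rho <= dY (f x) z). { apply Rnot_lt_le. intros h. apply hz. apply Hr. auto. }
        pose proof (Hkk m x). pose proof (md_tri hY (f x) (fs (kk m) x) z).
        rewrite (md_sym hY (f x) (fs (kk m) x)) in H1. lra.
Qed.

Lemma Delta_Meas {X Y} {dX : X -> X -> R} {dY : Y -> Y -> R} (hX : is_metric dX) (hY : is_metric dY)
  {W} {lt : W -> W -> Prop} (hW : countable_wellorder lt) xi g : ord_pos lt xi ->
  Delta_succ_function dX dY lt xi g -> Meas dX dY lt xi g.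
Proof. intros hp H U HU. apply H. apply SS_of_open; auto. Qed.

Lemma cont_local_Delta {X Y} {dX : X -> X -> R} {dY : Y -> Y -> R} (hX : is_metric dX) (hY : is_metric dY)
  {W} {lt : W -> W -> Prop} (hW : countable_wellorder lt) xi N C g : ord_pos lt xi ->
  is_partition (Sigma0_succ dX lt xi) N C -> locally_in (is_continuous dX dY) N C g ->
  Delta_succ_function dX dY lt xi g.
Proof.
  intros hp [_ [Hp [_ Hcov]]] Hl A HA.
  assert (Hg : forall n, exists gn, inN N n -> is_continuous dX dY gn /\ forall x, C n x -> g x = gn x).
  { intros n. destruct (classic (inN N n)) as [h|h].
    - destruct (Hl n h) as [gn hgn]. exists gn. auto.
    - exists g. intros h'; contradiction. }
  destruct (choice' _ Hg) as [gs Hgs].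
  apply (SS_ext xi (fun x => exists n, inN N n /\ C n x /\ A (gs n x))).
  - apply SS_union_n. intros n. destruct (classic (inN N n)) as [h|h].
    + apply (SS_ext xi (fun x => C n x /\ A (gs n x))).
      * apply (SS_and hX hW). apply Hp; auto. apply (SS_preimage (dY := dY)); auto. apply Hgs; auto.
      * intros x; tauto.
    + apply (SS_ext xi (fun _ => False)). apply SS_of_open; auto. apply mopen_empty. intros x; tauto.
  - intros x. split.
    + intros [n [hn [hc ha]]]. destruct (Hgs n hn) as [_ e]. rewrite e; auto.
    + intros ha. destruct (Hcov x) as [n [hn hc]]. exists n. split; auto. split; auto.
      destruct (Hgs n hn) as [_ e]. rewrite <- e; auto.
Qed.

Lemma approx_mono {X Y} {dX : X -> X -> R} {dY : Y -> Y -> R} {W} {lt : W -> W -> Prop} xi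
  (F G : (X -> Y) -> Prop) f : (forall g, F g -> G g) ->
  approx_locally dX dY lt xi F f -> approx_locally dX dY lt xi G f.
Proof.
  intros HFG [fs [Hu Hk]]. exists fs. split; auto. intros k. destruct (Hk k) as [N [C [Hp Hl]]].
  exists N, C. split; auto. intros n hn. destruct (Hl n hn) as [gn [h1 h2]]. exists gn. auto.
Qed.

Lemma const_lip {X Y} {dX : X -> X -> R} {dY : Y -> Y -> R} (hX : is_metric dX) (hY : is_metric dY) (g : X -> Y) :
  is_constant g -> is_lipschitz dX dY g.
Proof. intros [y hy]. exists 0. split; [lra|]. intros a b. rewrite !hy, (md_refl hY). nra. Qed.

Lemma lip_cont {X Y} {dX : X -> X -> R} {dY : Y -> Y -> R} (hX : is_metric dX) (hY : is_metric dY) (g : X -> Y) :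
  is_lipschitz dX dY g -> is_continuous dX dY g.
Proof.
  intros [L [hL H]] x e he. exists (e / (L + 1)). split.
  - apply Rdiv_lt_0_compat; lra.
  - intros y hy. pose proof (H x y). pose proof (md_nonneg hX x y).
    assert (L * dX x y <= L * (e / (L + 1))) by (apply Rmult_le_compat_l; lra).
    assert (L * (e / (L + 1)) < e).
    { apply (Rmult_lt_reg_r (L + 1)); [lra|]. field_simplify; [nra|lra]. }
    lra.
Qed.

Lemma REP {X} {d : X -> X -> R} (hd : is_metric d) {W} {lt : W -> W -> Prop} (hW : countable_wellorder lt)
  xi e P : Sigma0 d lt e P -> wle lt e xi -> ~ is_one lt xi ->
  exists (S : nat -> X -> Prop) (z : nat -> W),
    (forall l, (ord_pos lt (z l) /\ lt (z l) xi) /\ DD d lt (z l) (S l)) /\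
    (forall x, ~ P x <-> forall l, S l x).
Proof.
  intros H Hle Hn. destruct (classic (is_one lt e)) as [Ho|Ho].
  - pose proof (Sigma0_one_open hW e P H Ho) as HP.
    exists (NB d P), (fun _ => e). split.
    + intros l. split; [split; [apply one_pos; auto|]|].
      * destruct Hle as [h|h]; auto. subst; contradiction.
      * apply (DD_of_Sigma0 hd hW e). apply Sigma0_open; auto. apply NB_open; auto. apply wle_refl.
    + apply closed_inter_NB; auto.
  - destruct (Sigma0_notone_rep e P H Ho) as [F [eta [h1 [h2 h3]]]].
    exists (fun l x => ~ F l x), eta. split.
    + intros l. split; [split; [apply h1|]|].
      * eapply wlt_le_trans; eauto. apply h1.
      * apply (DD_of_Sigma0 hd hW (eta l)); auto. apply wle_refl.
    + intros x. rewrite h3. split; [intros h l hl; apply h; eauto|intros h [l hl]; apply (h l hl)].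
Qed.

Definition goodW {W} (lt : W -> W -> Prop) xi v := ord_pos lt v /\ lt v xi.

Lemma goodW_max {W} {lt : W -> W -> Prop} xi a b : goodW lt xi a -> goodW lt xi b -> goodW lt xi (wmax lt a b).
Proof. intros ha hb. destruct (wmax_cases lt a b) as [e|e]; rewrite e; auto. Qed.

Lemma bound1 {W} {lt : W -> W -> Prop} (hW : countable_wellorder lt) xi (g : nat -> W) v0 :
  (forall m, goodW lt xi (g m)) -> goodW lt xi v0 ->
  forall n, exists v, goodW lt xi v /\ forall m, (m <= n)%nat -> wle lt (g m) v.
Proof.
  intros Hg Hv n. induction n as [|n [v [hv Hv']]].
  - exists (g O). split; auto. intros m hm. replace m with O by lia. apply wle_refl.
  - exists (wmax lt v (g (S n))). split; [apply goodW_max; auto|].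
    intros m hm. destruct (Nat.eq_dec m (S n)) as [e|e].
    + subst. apply wmax_r; auto.
    + eapply wle_trans; eauto. apply Hv'; lia. apply wmax_l; auto.
Qed.

Lemma bound2 {W} {lt : W -> W -> Prop} (hW : countable_wellorder lt) xi (g : nat -> nat -> W) v0 :
  (forall t l, goodW lt xi (g t l)) -> goodW lt xi v0 ->
  forall n, exists v, goodW lt xi v /\ forall t l, (t <= n)%nat -> (l <= n)%nat -> wle lt (g t l) v.
Proof.
  intros Hg Hv n.
  assert (H : forall r, exists v, goodW lt xi v /\ forall t l, (t <= r)%nat -> (l <= n)%nat -> wle lt (g t l) v).
  { intros r. induction r as [|r [v [hv Hv']]].
    - destruct (bound1 hW xi (g O) v0 (Hg O) Hv n) as [v [hv Hv']]. exists v. split; auto.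
      intros t l ht hl. replace t with O by lia. auto.
    - destruct (bound1 hW xi (g (S r)) v0 (Hg (S r)) Hv n) as [w [hw Hw]].
      exists (wmax lt v w). split; [apply goodW_max; auto|].
      intros t l ht hl. destruct (Nat.eq_dec t (S r)) as [e|e].
      + subst. eapply wle_trans; eauto. apply wmax_r; auto.
      + eapply wle_trans; eauto. apply Hv'; lia. apply wmax_l; auto. }
  apply H.
Qed.

Definition LP (kk : nat -> nat) (n : nat) (b : nat -> bool) (k t : nat) : Prop :=
  (t <= n)%nat /\ b t = true /\ kk t = k /\ forall t', (t' < t)%nat -> b t' = true -> kk t' <> k.

Lemma LP_uniq kk n b k t t' : LP kk n b k t -> LP kk n b k t' -> t = t'.
Proof.
  intros [h1 [h2 [h3 h4]]] [g1 [g2 [g3 g4]]]. destruct (Nat.lt_trichotomy t t') as [h|[h|h]]; auto.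
  - exfalso. apply (g4 t h h2 h3).
  - exfalso. apply (h4 t' h g2 g3).
Qed.

Definition meet {Y} (dY : Y -> Y -> R) (c : nat -> Y) (kk : nat -> nat) (t t' : nat) : Prop :=
  exists y, dY (c t) y < eps (kk t) /\ dY (c t') y < eps (kk t').

Definition GoodK {Y} (dY : Y -> Y -> R) (c : nat -> Y) (kk : nat -> nat) n b K : Prop :=
  (K <= n)%nat /\ forall k, (k <= K)%nat -> exists t tK, LP kk n b k t /\ LP kk n b K tK /\ meet dY c kk t tK.

Definition SelP {Y} (dY : Y -> Y -> R) (c : nat -> Y) (kk : nat -> nat) n b t : Prop :=
  exists K, GoodK dY c kk n b K /\ LP kk n b K t /\ forall K', GoodK dY c kk n b K' -> (K' <= K)%nat.

Definition sel {Y} (dY : Y -> Y -> R) (c : nat -> Y) (y0 : Y) (kk : nat -> nat) n b : Y :=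
  match excluded_middle_informative (exists t, SelP dY c kk n b t) with
  | left H => c (proj1_sig (constructive_indefinite_description _ H))
  | right _ => y0
  end.

Definition restr (n : nat) (b : nat -> bool) : nat -> bool := fun t => if Nat.leb t n then b t else false.

Lemma KEY {X Y} {dX : X -> X -> R} {dY : Y -> Y -> R} (hX : is_metric dX) (hY : is_metric dY)
  {W} {lt : W -> W -> Prop} (hW : countable_wellorder lt) xi (hp : ord_pos lt xi) (hn : ~ is_one lt xi)
  (dn : nat -> Y) (Hd : forall y e, 0 < e -> exists i, dY y (dn i) < e) f :
  Meas dX dY lt xi f ->
  exists (h : nat -> X -> Y) (eta : nat -> W), (forall n, ord_pos lt (eta n) /\ lt (eta n) xi) /\
    (forall n, Meas dX dY lt (eta n) (h n)) /\ forall x, mconverges dY (fun n => h n x) (f x).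
Proof.
  intros Hf.
  assert (HR : forall ik : nat * nat, exists p : (nat -> X -> Prop) * (nat -> W),
     (forall j, ord_pos lt (snd p j) /\ wle lt (snd p j) xi) /\
     (forall j, Sigma0 dX lt (snd p j) (fun x => ~ fst p j x)) /\
     (forall x, dY (dn (fst ik)) (f x) < eps (snd ik) <-> exists j, fst p j x)).
  { intros [i k]. destruct (Hf (fun y => dY (dn i) y < eps k) (ball_open hY _ _)) as [F [eta [h1 [h2 h3]]]].
    exists (F, eta). simpl. auto. }
  destruct (choice' _ HR) as [Rk HRk].
  set (ii := fun t => fst (of_nat t)).
  set (kk := fun t => fst (of_nat (snd (of_nat t)))).
  set (jj := fun t => snd (of_nat (snd (of_nat t)))).
  set (Q := fun t x => fst (Rk (ii t, kk t)) (jj t) x).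
  assert (HQ1 : forall t x, Q t x -> dY (dn (ii t)) (f x) < eps (kk t)).
  { intros t x hq. apply (proj2 (proj2 (HRk (ii t, kk t)))). simpl. exists (jj t). exact hq. }
  assert (HQ2 : forall x k, exists t, kk t = k /\ Q t x).
  { intros x k. destruct (Hd (f x) (eps k) (eps_pos k)) as [i hi].
    rewrite (md_sym hY) in hi.
    apply (proj2 (proj2 (HRk (i, k)))) in hi. simpl in hi. destruct hi as [j hj].
    exists (to_nat (i, to_nat (k, j))). unfold kk, Q, ii, kk, jj. rewrite !cancel_of_to. cbn [fst snd].
    rewrite !cancel_of_to. cbn [fst snd]. split; auto. }
  assert (HS : forall t, exists p : (nat -> X -> Prop) * (nat -> W),
     (forall l, goodW lt xi (snd p l) /\ DD dX lt (snd p l) (fst p l)) /\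
     (forall x, Q t x <-> forall l, fst p l x)).
  { intros t. destruct (HRk (ii t, kk t)) as [h1 [h2 h3]].
    destruct (REP hX hW xi _ _ (h2 (jj t)) (proj2 (h1 (jj t))) hn) as [S [z [g1 g2]]].
    exists (S, z). simpl. split; auto. intros x. unfold Q. rewrite <- g2. split; [intros h h'; auto|apply NNPP]. }
  destruct (choice' _ HS) as [SP HSP].
  set (Sx := fun t => fst (SP t)). set (zz := fun t => snd (SP t)).
  destruct (notone_pos_below hW xi hp hn) as [v0 [hv0 hv0']].
  assert (HL : forall n, exists v, goodW lt xi v /\ forall t l, (t <= n)%nat -> (l <= n)%nat -> wle lt (zz t l) v).
  { apply (bound2 hW xi zz v0). intros t l. apply (proj1 (proj1 (HSP t) l)). split; auto. }
  destruct (choice' _ HL) as [eta Heta].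
  set (T := fun n t x => forall l, (l <= n)%nat -> Sx t l x).
  assert (HT : forall n t, (t <= n)%nat -> DD dX lt (eta n) (T n t)).
  { intros n t ht. apply (DD_forall_le hX hW). apply (Heta n). intros l hl.
    apply (DD_mono hW (zz t l)). apply (proj2 (proj1 (HSP t) l)). apply (Heta n); auto. }
  set (c := fun t => dn (ii t)).
  set (h := fun n x => sel dY c (dn O) kk n (restr n (fun t => bdec (T n t x)))).
  exists h, eta. split; [intros n; apply (Heta n)|split].
  - intros n U HU. unfold h.
    apply (bool_meas hX hW (eta n) (T n) (proj1 (proj1 (Heta n))) (S n)
             (fun b => U (sel dY c (dn O) kk n (restr n b)))).
    + intros b b' hb. assert (E : restr n b = restr n b').
      { apply functional_extensionality. intros t. unfold restr. destruct (Nat.leb t n) eqn:E; auto.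
        apply Nat.leb_le in E. apply hb. lia. }
      rewrite E. tauto.
    + intros t ht. apply HT. lia.
  - intros x e he.
    destruct (eps_small (e / 3)) as [k0 hk0]; [lra|].
    set (Lst := fun k t => (kk t = k /\ Q t x) /\ forall s, (s < t)%nat -> ~ (kk s = k /\ Q s x)).
    assert (Htau : forall k, exists t, Lst k t). { intros k. apply least_nat. apply HQ2. }
    assert (HM : forall K, exists M, forall k, (k <= K)%nat -> exists t, (t < M)%nat /\ Lst k t).
    { induction K as [|K [M HM]].
      - destruct (Htau O) as [t ht]. exists (S t). intros k hk. replace k with O by lia. exists t; split; auto.
      - destruct (Htau (S K)) as [t ht]. exists (M + S t)%nat. intros k hk.
        destruct (Nat.eq_dec k (S K)) as [E|E].
        + subst. exists t. split; auto. lia.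
        + destruct (HM k ltac:(lia)) as [t' [h1 h2]]. exists t'. split; auto. lia. }
    destruct (HM k0) as [M HMk].
    assert (HLb : forall M', exists L, forall t, (t < M')%nat -> ~ Q t x -> exists l, (l <= L)%nat /\ ~ Sx t l x).
    { induction M' as [|M' [L HL']].
      - exists O. intros t ht; lia.
      - destruct (classic (Q M' x)) as [hq|hq].
        + exists L. intros t ht hnq. destruct (Nat.eq_dec t M') as [E|E]; [subst; contradiction|].
          apply HL'; auto; lia.
        + assert (exists l, ~ Sx M' l x).
          { apply not_all_ex_not. intros H. apply hq. apply (HSP M'). exact H. }
          destruct H as [l hl]. exists (L + l)%nat. intros t ht hnq.
          destruct (Nat.eq_dec t M') as [E|E].
          * subst. exists l. split; auto; lia.
          * destruct (HL' t ltac:(lia) hnq) as [l' [h1 h2]]. exists l'. split; auto; lia. }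
    destruct (HLb M) as [L HLM].
    exists (M + L + k0)%nat. intros n hnN.
    set (b := restr n (fun t => bdec (T n t x))).
    assert (Hbt : forall t, (t <= n)%nat -> Q t x -> b t = true).
    { intros t ht hq. unfold b, restr. apply Nat.leb_le in ht. rewrite ht. apply bdec_true.
      intros l hl. apply (HSP t). exact hq. }
    assert (Hbf : forall t, (t < M)%nat -> ~ Q t x -> b t = false).
    { intros t ht hq. unfold b, restr. destruct (Nat.leb t n); auto. apply bdec_false.
      destruct (HLM t ht hq) as [l [hl hs]]. intros HTt. apply hs. apply HTt. lia. }
    assert (HLP : forall k, (k <= k0)%nat -> exists t, Lst k t /\ LP kk n b k t).
    { intros k hk. destruct (HMk k hk) as [t [htM [[hk1 hk2] hmin]]]. exists t. split.
      - split; auto.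
      - split; [lia|split; [apply Hbt; auto; lia|split; auto]].
        intros t' ht' hb' hk'. destruct (classic (Q t' x)) as [hq|hq].
        + apply (hmin t' ht'). auto.
        + rewrite (Hbf t' ltac:(lia) hq) in hb'. discriminate. }
    assert (Hgood : GoodK dY c kk n b k0).
    { split; [lia|]. intros k hk. destruct (HLP k hk) as [t [[[e1 q1] _] l1]].
      destruct (HLP k0 (le_n _)) as [t0 [[[e2 q2] _] l2]].
      exists t, t0. split; auto. split; auto. exists (f x). unfold c. split.
      + pose proof (HQ1 t x q1). rewrite e1 in H |- *. auto.
      + pose proof (HQ1 t0 x q2). auto. }
    assert (Hsel : exists t, SelP dY c kk n b t).
    { destruct (greatest_nat (GoodK dY c kk n b) n) as [K [hK hKm]].
      - exists k0; auto.
      - intros K [hK _]; auto.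
      - destruct hK as [hK1 hK2]. destruct (hK2 K (le_n _)) as [t [tK [_ [hl _]]]].
        exists tK. exists K. split; [split; auto|split; auto]. }
    unfold h. fold b. unfold sel.
    destruct (excluded_middle_informative (exists t, SelP dY c kk n b t)) as [Hs|Hs]; [|contradiction].
    destruct (constructive_indefinite_description _ Hs) as [ts Hts]. simpl.
    destruct Hts as [K [hgK [hlpK hmax]]].
    pose proof (hmax k0 Hgood) as hk0K.
    destruct hgK as [_ hgK]. destruct (hgK k0 hk0K) as [t0 [tK [hl0 [hlK [y [hy1 hy2]]]]]].
    destruct (HLP k0 (le_n _)) as [tau [[[e1 q1] _] ltau]].
    pose proof (LP_uniq _ _ _ _ _ _ hl0 ltau). subst t0.
    pose proof (LP_uniq _ _ _ _ _ _ hlK hlpK). subst tK.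
    destruct hlpK as [_ [_ [hkts _]]]. rewrite hkts in hy2. rewrite e1 in hy1.
    pose proof (eps_anti _ _ hk0K).
    pose proof (HQ1 tau x q1). rewrite e1 in H0. fold (c tau) in H0.
    pose proof (md_tri hY (c ts) y (f x)). pose proof (md_tri hY y (c tau) (f x)).
    rewrite (md_sym hY y (c tau)) in H2. lra.
Qed.

Lemma Meas_Baire {X Y} {dX : X -> X -> R} {dY : Y -> Y -> R} (hX : is_metric dX) (hY : is_metric dY)
  {W} {lt : W -> W -> Prop} (hW : countable_wellorder lt)
  (dn : nat -> Y) (Hd : forall y e, 0 < e -> exists i, dY y (dn i) < e) :
  forall xi, ord_pos lt xi -> forall f, Meas dX dY lt xi f -> Baire dX dY lt xi f.
Proof.
  intros xi. induction xi as [xi IH] using (well_founded_induction (wlt_wf hW)).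
  intros hp f Hf. destruct (classic (is_one lt xi)) as [Ho|Ho].
  - apply Baire_one; auto.
  - destruct (KEY hX hY hW xi hp Ho dn Hd f Hf) as [h [eta [h1 [h2 h3]]]].
    apply (Baire_lim dX dY lt xi f h eta); auto.
    intros n. apply IH. apply h1. apply h1. apply h2.
Qed.

Lemma Meas_approx {X Y} {dX : X -> X -> R} {dY : Y -> Y -> R} (hX : is_metric dX) (hY : is_metric dY)
  {W} {lt : W -> W -> Prop} (hW : countable_wellorder lt) xi (hp : ord_pos lt xi)
  (dn : nat -> Y) (Hd : forall y e, 0 < e -> exists i, dY y (dn i) < e) (x0 : X) f :
  Meas dX dY lt xi f -> approx_locally dX dY lt xi is_constant f.
Proof.
  intros Hf.
  assert (Hk : forall k, exists g : X -> Y, (forall x, dY (g x) (f x) < eps k) /\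
            exists N C, is_partition (Sigma0_succ dX lt xi) N C /\ locally_in is_constant N C g).
  { intros k.
    assert (HR : forall i, exists p : (nat -> X -> Prop) * (nat -> W),
       (forall j, ord_pos lt (snd p j) /\ wle lt (snd p j) xi) /\
       (forall j, Sigma0 dX lt (snd p j) (fun x => ~ fst p j x)) /\
       (forall x, dY (dn i) (f x) < eps k <-> exists j, fst p j x)).
    { intros i. destruct (Hf (fun y => dY (dn i) y < eps k) (ball_open hY _ _)) as [F [eta [h1 [h2 h3]]]].
      exists (F, eta). simpl. auto. }
    destruct (choice' _ HR) as [Rk HRk].
    set (Q := fun t x => fst (Rk (fst (of_nat t))) (snd (of_nat t)) x).
    assert (HQD : forall t, DD dX lt xi (Q t)).
    { intros t. destruct (HRk (fst (of_nat t))) as [h1 [h2 h3]]. split.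
      - apply (SS_ext xi (fun x => ~ ~ Q t x)).
        + apply (SS_of_coSigma0 (snd (Rk (fst (of_nat t))) (snd (of_nat t)))). apply h2. apply h1.
        + intros x; split; [apply NNPP|intros h h'; auto].
      - apply (SS_of_Sigma0 hX hW (snd (Rk (fst (of_nat t))) (snd (of_nat t)))). apply h2. apply h1. }
    assert (HQ1 : forall t x, Q t x -> dY (dn (fst (of_nat t))) (f x) < eps k).
    { intros t x hq. apply (proj2 (proj2 (HRk (fst (of_nat t))))). exists (snd (of_nat t)). exact hq. }
    assert (HQ2 : forall x, exists t, Q t x).
    { intros x. destruct (Hd (f x) (eps k) (eps_pos k)) as [i hi]. rewrite (md_sym hY) in hi.
      apply (proj2 (proj2 (HRk i))) in hi. destruct hi as [j hj]. exists (to_nat (i, j)).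
      unfold Q. rewrite cancel_of_to. cbn [fst snd]. exact hj. }
    set (E := fun t x => Q t x /\ forall s, (s < t)%nat -> ~ Q s x).
    assert (HED : forall t, DD dX lt xi (E t)).
    { intros t. apply (DD_and hX hW). apply HQD. apply (DD_forall_lt hX hW xi (fun s x => ~ Q s x) t hp).
      intros l hl. apply DD_compl. apply HQD. }
    assert (Hdisj : forall t t' x, E t x -> E t' x -> t = t').
    { intros t t' x [h1 h2] [g1 g2]. destruct (Nat.lt_trichotomy t t') as [h|[h|h]]; auto.
      - exfalso. apply (g2 t h h1).
      - exfalso. apply (h2 t' h g1). }
    assert (Hcov : forall x, exists t, E t x).
    { intros x. destruct (least_nat (fun t => Q t x) (HQ2 x)) as [t [h1 h2]]. exists t. split; auto. }
    destruct (reindex (fun t => exists x, E t x)) as [N [sg [hN [hJ [hinj hsurj]]]]].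
    { destruct (Hcov x0) as [t ht]. eauto. }
    set (g := fun x => dn (fst (of_nat (proj1_sig (constructive_indefinite_description _ (Hcov x)))))).
    assert (Hg : forall x t, E t x -> g x = dn (fst (of_nat t))).
    { intros x t ht. unfold g. destruct (constructive_indefinite_description _ (Hcov x)) as [t' ht']. simpl.
      rewrite (Hdisj t' t x ht' ht). auto. }
    exists g. split.
    - intros x. destruct (Hcov x) as [t ht]. rewrite (Hg x t ht). apply HQ1. apply ht.
    - exists N, (fun n => E (sg n)). split.
      + split; [auto|split; [|split]].
        * intros n hn. split; [apply hJ; auto|apply (HED (sg n))].
        * intros n m x hn hm h1 h2. apply hinj; auto. eapply Hdisj; eauto.
        * intros x. destruct (Hcov x) as [t ht]. destruct (hsurj t (ex_intro _ x ht)) as [n [hn e]].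
          exists n. split; auto. rewrite e. auto.
      + intros n hn. exists (fun _ => dn (fst (of_nat (sg n)))). split; [exists (dn (fst (of_nat (sg n)))); auto|].
        intros x hx. apply Hg. auto. }
  destruct (choice' _ Hk) as [fs Hfs]. exists fs. split.
  - intros e he. destruct (eps_small e he) as [K hK]. exists K. intros n x hn.
    pose proof (proj1 (Hfs n) x). pose proof (eps_anti _ _ hn). lra.
  - intros k. apply (proj2 (Hfs k)).
Qed.

Lemma sep_seq {Y} {dY : Y -> Y -> R} (y0 : Y) : separable dY ->
  exists dn : nat -> Y, forall y e, 0 < e -> exists i, dY y (dn i) < e.
Proof.
  intros [D [[g hg] Hd]].
  assert (H : forall i, exists z, (exists z', D z' /\ g z' = i) -> D z /\ g z = i).
  { intros i. destruct (classic (exists z', D z' /\ g z' = i)) as [[z' hz']|hno].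
    - exists z'. auto.
    - exists y0. intros h; contradiction. }
  destruct (choice' _ H) as [dn Hdn]. exists dn. intros y e he.
  destruct (Hd y e he) as [z [hz hyz]]. exists (g z).
  destruct (Hdn (g z)) as [h1 h2]; [eauto|]. rewrite (hg _ _ h1 hz h2). auto.
Qed.

Theorem mainTheorem10
  (X : Type) (dX : X -> X -> R) (Y : Type) (dY : Y -> Y -> R)
  (hX : is_metric dX) (hY : is_metric dY) (hYsep : separable dY)
  (hXne : inhabited X)
  (W : Type) (lt : W -> W -> Prop) (hW : countable_wellorder lt)
  (xi : W) (hxi : ord_pos lt xi) (f : X -> Y) :
  let i := Baire dX dY lt xi f in
  (i <-> approx_locally dX dY lt xi is_constant f) /\
  (i <-> approx_locally dX dY lt xi (is_lipschitz dX dY) f) /\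
  (i <-> approx_locally dX dY lt xi (is_continuous dX dY) f) /\
  (i <-> exists fs : nat -> X -> Y,
           unif_converges dY fs f /\
           forall k, Delta_succ_function dX dY lt xi (fs k)).
Proof.
  intros i. destruct hXne as [x0].
  destruct (sep_seq (f x0) hYsep) as [dn Hdn].
  assert (I2M : i -> Meas dX dY lt xi f) by (apply Baire_Meas; auto).
  assert (M2I : Meas dX dY lt xi f -> i) by (apply (Meas_Baire hX hY hW dn Hdn); auto).
  assert (M2c : Meas dX dY lt xi f -> approx_locally dX dY lt xi is_constant f)
    by (apply (Meas_approx hX hY hW xi hxi dn Hdn x0)).
  assert (c2l : approx_locally dX dY lt xi is_constant f -> approx_locally dX dY lt xi (is_lipschitz dX dY) f)
    by (apply approx_mono; apply const_lip; auto).
  assert (l2k : approx_locally dX dY lt xi (is_lipschitz dX dY) f -> approx_locally dX dY lt xi (is_continuous dX dY) f)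
    by (apply approx_mono; apply lip_cont; auto).
  assert (k2v : approx_locally dX dY lt xi (is_continuous dX dY) f ->
     exists fs : nat -> X -> Y, unif_converges dY fs f /\ forall k, Delta_succ_function dX dY lt xi (fs k)).
  { intros [fs [Hu Hk]]. exists fs. split; auto. intros k. destruct (Hk k) as [N [C [Hp Hl]]].
    eapply cont_local_Delta; eauto. }
  assert (v2M : (exists fs : nat -> X -> Y, unif_converges dY fs f /\ forall k, Delta_succ_function dX dY lt xi (fs k)) ->
     Meas dX dY lt xi f).
  { intros [fs [Hu Hk]]. apply (unif_Meas hX hY hW xi fs f Hu). intros k. apply Delta_Meas; auto. }
  clearbody i. tauto.
Qed.
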